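(* Fix $n$ and $T^n\in\mathcal A^n$. Then for every $t\ge0$, $\bar T^n(t)$ is a stopping time for the multi-parameter filtration $\{\mathcal G^n_u\}_{u\in\mathcal U}$, i.e. $\{\bar T^n(t)\preccurlyeq u\}\in\mathcal G^n_u$ for every $u\in\mathcal U$.
   Context: Finite sets $\mathcal I$, $\mathcal K$, activities $\mathcal J\subset\mathcal I\times\mathcal K$; $\mathcal J_i=\{(i,k)\in\mathcal J\}$, $\mathcal J^k=\{(i,k)\in\mathcal J\}$; $G$ is the $K\times J$ matrix with $G_{kj}=1_{j\in\mathcal J^k}$. For fixed $n$: rates $\lambda^n_i,\mu^n_j>0$; mutually independent renewal processes $\check A_i,\check S_j$ with right-continuous paths and IID strictly positive interarrival times; a random element $\Upsilon$ in a Polish space independent of them; $A^n_i(t)=\check A_i(\lambda^n_it)$, $S^n_j(t)=\check S_j(\mu^n_jt)$. $\mathcal A^n$ is the set of processes $T^n=(T^n_j)_{j\in\mathcal J}$ with continuous nondecreasing $1$-Lipschitz paths, $T^n(0)=0$, such that with $D^n_j=S^n_j\circ T^n_j$, $X^n_i(t)=A^n_i(t)-\sum_{j\in\mathcal J_i}D^n_j(t)$, $I^n_k(t)=t-(GT^n(t))_k$, one has $X^n_i\ge0$, $I^n_k$ nondecreasing, and $T^n$ adapted to $\mathcal F^n_t=\sigma\{A^n(s),D^n(s),s\le t;\Upsilon\}$. Let $\mathcal J^0=\{(i,0):i\in\mathcal I\}\cup\mathcal J$ and set $S^n_{(i,0)}=A^n_i$. Let $\mathcal U=\mathbb R_+^{\mathcal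 J^0}$ with partial order $u\preccurlyeq v$ iff $u_j\le v_j$ for all $j$; $S^n(v)=(S^n_j(v_j))_{j\in\mathcal J^0}$. $\mathcal G^n_u=\sigma\{\Upsilon,S^n(v):v\preccurlyeq u\}$, and $\bar T^n(t)\in\mathcal U$ is defined by $\bar T^n_{(i,0)}(t)=t$, $i\in\mathcal I$, and $\bar T^n_j(t)=T^n_j(t)$, $j\in\mathcal J$. *)

(* Defs.v *)
From HB Require Import structures.
From mathcomp Require Import all_boot all_order all_algebra.
From mathcomp Require Import all_classical all_reals all_analysis.
Set Implicit Arguments. Unset Strict Implicit. Unset Printing Implicit Defensive.
Import Order.TTheory GRing.Theory Num.Theory numFieldNormedType.Exports.
Local Open Scope classical_set_scope.
Local Open Scope ring_scope.

Definition gen_sigma (Omega : Type) (G : set (set Omega)) : set (set Omega) :=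
  <<s G >>.

Definition borel_sets (Y : topologicalType) : set (set Y) :=
  <<s [set U : set Y | open U] >>.

(** Polish space: a complete metric space (Hausdorff pseudometric = metric)
    which is separable *)
Definition polish_space (R : realType) (Y : completePseudoMetricType R) : Prop :=
  hausdorff_space Y /\ exists D : set Y, countable D /\ dense D.

Definition preim_R (R : realType) (Omega : Type) (f : Omega -> R) : set (set Omega) :=
  [set f @^-1` B | B in [set B : set R | measurable B]].

Definition mutually_independent d (Omega : measurableType d) (R : realType)
  (P : probability Omega R) (idx : eqType) (D : set idx)
  (F : idx -> set (set Omega)) : Prop :=
  forall (s : seq idx) (A : idx -> set Omega), uniq s ->
    (forall i, i \in s -> D i /\ F i (A i)) ->
    P (\bigcap_(i in [set i | i \in s]) A i) = (\prod_(i <- s) P (A i))%E.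

(** [N] is a renewal counting process (on t >= 0) with IID strictly positive
    interarrival times: N t = max {m | xi_0 + ... + xi_(m-1) <= t}
    (finite, right-continuous paths). *)
Definition renewal_process d (Omega : measurableType d) (R : realType)
  (P : probability Omega R) (N : R -> Omega -> nat) : Prop :=
  exists xi : nat -> Omega -> R,
    [/\ (forall k, measurable_fun setT (xi k)),
        (forall k w, 0 < xi k w),
        mutually_independent P setT (fun k => preim_R (xi k)),
        (forall k B, measurable B -> P (xi k @^-1` B) = P (xi 0%N @^-1` B)) &
        (forall t w m, 0 <= t -> (m <= N t w)%N = (\sum_(k < m) xi k w <= t))].

Section network.
Context (R : realType) (Omega : Type) (I K : finType) (J : {set (I * K)}).
Context (lam : I -> R) (mu : I * K -> R).
Context (Ach : I -> R -> Omega -> nat) (Sch : I * K -> R -> Omega -> nat).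

Definition A_n (i : I) (t : R) (w : Omega) : nat := Ach i (lam i * t) w.
Definition S_n (j : I * K) (t : R) (w : Omega) : nat := Sch j (mu j * t) w.

Context (T : I * K -> R -> Omega -> R).

Definition D_n (j : I * K) (t : R) (w : Omega) : nat := S_n j (T j t w) w.

Definition X_n (i : I) (t : R) (w : Omega) : int :=
  (A_n i t w)%:Z - (\sum_(j in J | j.1 == i) D_n j t w)%:Z.

Definition GT_n (k : K) (t : R) (w : Omega) : R :=
  \sum_(j in J | j.2 == k) T j t w.

Definition I_n (k : K) (t : R) (w : Omega) : R := t - GT_n k t w.

Context (Y : Type) (Ups : Omega -> Y) (borelY : set (set Y)).

Definition F_n (t : R) : set (set Omega) :=
  gen_sigma
   ([set E | exists s (B : set ((I -> nat) * (I * K -> nat))),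
        0 <= s <= t /\
        E = (fun w => (fun i => A_n i s w,
                       fun j => if j \in J then D_n j s w else 0%N)) @^-1` B]
    `|` [set Ups @^-1` B | B in borelY]).

Definition admissible : Prop :=
  (forall j w, j \in J -> {within [set t : R | 0 <= t], continuous (fun t : R => T j t w)}) /\
  (forall j w s t, j \in J -> 0 <= s -> s <= t -> T j s w <= T j t w) /\
  (forall j w s t, j \in J -> 0 <= s -> 0 <= t -> `|T j t w - T j s w| <= `|t - s|) /\
  (forall j w, j \in J -> T j 0 w = 0) /\
  (forall i t w, 0 <= t -> (0 <= X_n i t w)%R) /\
  (forall k w s t, 0 <= s -> s <= t -> I_n k s w <= I_n k t w) /\
  (forall j t B, j \in J -> 0 <= t -> measurable B -> F_n t (T j t @^-1` B)).

End network.

Section multiparam.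
Context (R : realType) (Omega : Type) (I K : finType) (J : {set (I * K)}).
Context (lam : I -> R) (mu : I * K -> R).
Context (Ach : I -> R -> Omega -> nat) (Sch : I * K -> R -> Omega -> nat).
Context (Y : Type) (Ups : Omega -> Y) (borelY : set (set Y)).

(** Elements of U = R_+^{J^0} are represented by a pair (uI, uJ):
    uI i is the (i,0)-coordinate and uJ j the j-coordinate (j in J).
    S^n(v) = (S^n_j(v_j))_{j in J^0}, with S^n_{(i,0)} = A^n_i;
    coordinates outside J^0 are set to 0. *)
Definition S_vec (vI : I -> R) (vJ : I * K -> R) (w : Omega)
  : (I -> nat) * (I * K -> nat) :=
  (fun i => A_n lam Ach i (vI i) w,
   fun j => if j \in J then S_n mu Sch j (vJ j) w else 0%N).

Definition in_U (vI : I -> R) (vJ : I * K -> R) : Prop :=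
  (forall i, 0 <= vI i) /\ (forall j, j \in J -> 0 <= vJ j).

Definition preceq (vI : I -> R) (vJ : I * K -> R) (uI : I -> R) (uJ : I * K -> R) : Prop :=
  (forall i, vI i <= uI i) /\ (forall j, j \in J -> vJ j <= uJ j).

Definition G_n (uI : I -> R) (uJ : I * K -> R) : set (set Omega) :=
  gen_sigma
   ([set E | exists vI vJ (B : set ((I -> nat) * (I * K -> nat))),
        [/\ in_U vI vJ, preceq vI vJ uI uJ & E = S_vec vI vJ @^-1` B]]
    `|` [set Ups @^-1` B | B in borelY]).

(** the event {Tbar(t) <= u}, where Tbar_(i,0)(t) = t and Tbar_j(t) = T_j(t) *)
Definition Tbar_le (T : I * K -> R -> Omega -> R) (t : R)
  (uI : I -> R) (uJ : I * K -> R) : set Omega :=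
  [set w | preceq (fun _ => t) (fun j => T j t w) uI uJ].

End multiparam.

(* Main.v *)
Require Import Defs.
From HB Require Import structures.
From mathcomp Require Import all_boot all_order all_algebra.
From mathcomp Require Import all_classical all_reals all_analysis.
From mathcomp.algebra_tactics Require Import lra.
Import Order.TTheory GRing.Theory Num.Theory numFieldNormedType.Exports.
Local Open Scope classical_set_scope.
Local Open Scope ring_scope.

Section SA.
Context {Omega : Type} {A : set (set Omega)} (SA : sigma_algebra setT A).

Lemma SAeq {E1 E2} : A E1 -> E1 = E2 -> A E2. Proof. by move=> h <-. Qed.
Lemma SA0 : A set0. Proof. by case: SA. Qed.
Lemma SAC E : A E -> A (~` E). Proof. by case: SA => _ h _ /h; rewrite setTD. Qed.
Lemma SAT : A setT. Proof. by rewrite -setC0; apply: SAC; exact: SA0. Qed.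
Lemma SAbigcup (F : nat -> set Omega) : (forall n, A (F n)) -> A (\bigcup_n F n).
Proof. by case: SA => _ _; apply. Qed.
Lemma SAU E1 E2 : A E1 -> A E2 -> A (E1 `|` E2).
Proof. move=> h1 h2; rewrite -bigcup2E; apply: SAbigcup => -[|[|n]] //=; exact: SA0. Qed.
Lemma SAI E1 E2 : A E1 -> A E2 -> A (E1 `&` E2).
Proof.
move=> h1 h2; rewrite -[_ `&` _]setCK setCI; apply: SAC; apply: SAU; exact: SAC.
Qed.
Lemma SAD E1 E2 : A E1 -> A E2 -> A (E1 `\` E2).
Proof. by move=> h1 h2; rewrite setDE; apply: SAI => //; exact: SAC. Qed.
Lemma SAbigcap (F : nat -> set Omega) : (forall n, A (F n)) -> A (\bigcap_n F n).
Proof.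
move=> h; rewrite -[X in A X]setCK setC_bigcap; apply: SAC; apply: SAbigcup => n.
exact: SAC.
Qed.
Lemma SAbigcupT (T : countType) (F : T -> set Omega) :
  (forall x, A (F x)) -> A (\bigcup_(x in setT) F x).
Proof.
move=> h.
have -> : \bigcup_(x in setT) F x =
   \bigcup_n (match @unpickle T n with Some x => F x | None => set0 end).
  apply/seteqP; split=> w /=.
    by move=> [x _ Fx]; exists (pickle x) => //; rewrite pickleK.
  by move=> [n _]; case: (unpickle n) => // x Fx; exists x.
by apply: SAbigcup => n; case: (unpickle n) => //; exact: SA0.
Qed.
Lemma SAbigcapT (T : countType) (F : T -> set Omega) :
  (forall x, A (F x)) -> A (\bigcap_(x in setT) F x).
Proof.
move=> h; rewrite -[X in A X]setCK setC_bigcap; apply: SAC; apply: SAbigcupT => n.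
exact: SAC.
Qed.
Lemma SA_forall (T : countType) (F : T -> set Omega) :
  (forall x, A (F x)) -> A [set w | forall x, F x w].
Proof.
move=> h; suff -> : [set w | forall x, F x w] = \bigcap_(x in setT) F x by exact: SAbigcapT.
by apply/seteqP; split=> w /= hw x; [move=> _|]; apply: hw.
Qed.
Lemma SA_exists (T : countType) (F : T -> set Omega) :
  (forall x, A (F x)) -> A [set w | exists x, F x w].
Proof.
move=> h; suff -> : [set w | exists x, F x w] = \bigcup_(x in setT) F x by exact: SAbigcupT.
by apply/seteqP; split=> w /= [x]; [exists x|move=> _; exists x].
Qed.
Lemma SA_prop (P : Prop) : A [set _ : Omega | P].
Proof.
case: (boolp.EM P) => hP.
  suff -> : [set _ : Omega | P] = setT by exact: SAT.
  by apply/seteqP; split.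
suff -> : [set _ : Omega | P] = set0 by exact: SA0.
by apply/seteqP; split.
Qed.
Lemma SA_impl (P Q : set Omega) : A P -> A Q -> A [set w | P w -> Q w].
Proof.
move=> hP hQ; suff -> : [set w | P w -> Q w] = ~` P `|` Q by apply: SAU => //; exact: SAC.
apply/seteqP; split=> w /=.
  by move=> h; case: (boolp.EM (P w)) => hw; [right; apply: h|left].
by move=> [h1 h2|h1 _].
Qed.
Lemma SA_impl' (P Q : set Omega) : A P -> A (Q `&` P) -> A [set w | P w -> Q w].
Proof.
move=> hP hQ; suff -> : [set w | P w -> Q w] = ~` P `|` (Q `&` P) by apply: SAU => //; exact: SAC.
apply/seteqP; split=> w /=.
  by move=> h; case: (boolp.EM (P w)) => hw; [right; split => //; apply: h|left].
by move=> [h1 h2|[h1 _] _].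
Qed.
Lemma SA_and (P Q : set Omega) : A P -> A Q -> A [set w | P w /\ Q w].
Proof. exact: SAI. Qed.
Lemma SA_forallp (T : countType) (p : T -> Prop) (F : T -> set Omega) :
  (forall x, p x -> A (F x)) -> A [set w | forall x, p x -> F x w].
Proof.
move=> h; apply: SA_forall => x.
case: (boolp.EM (p x)) => px.
  apply: (SAeq (h x px)).
  by apply/seteqP; split=> w /=; [move=> ? ?|apply].
apply: (SAeq SAT).
by apply/seteqP; split=> w //= _.
Qed.
End SA.

Lemma trace_SA {Omega : Type} (A : set (set Omega)) (SA : sigma_algebra setT A)
  (Y : set Omega) : A Y -> sigma_algebra setT [set E | A (E `&` Y)].
Proof.
move=> AY; split => /=.
- by rewrite set0I; exact: SA0.
- move=> E AE; rewrite setTD.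
  have -> : ~` E `&` Y = Y `\` (E `&` Y).
    by apply/seteqP; split=> w /=; [move=> [nE Yw]; split => // -[]|move=> [Yw nEY]; split => // Ew; apply: nEY].
  exact: SAD.
- move=> F h; rewrite setI_bigcupl; exact: SAbigcup.
Qed.

Lemma gen_SA {Omega : Type} (G : set (set Omega)) : sigma_algebra setT (<<s G >>).
Proof. exact: smallest_sigma_algebra. Qed.

Lemma DL {Omega : Type} (A : set (set Omega)) (SA : sigma_algebra setT A)
  (I K : finType) (a : I -> Omega -> nat) (b : K -> Omega -> nat) :
  (forall i n, A [set w | a i w = n]) -> (forall j n, A [set w | b j w = n]) ->
  forall B : set ((I -> nat) * (K -> nat)),
    A [set w | B ((fun i => a i w), (fun j => b j w))].
Proof.
move=> ha hb B.
pose F (x : {ffun I -> nat} * {ffun K -> nat}) : set Omega :=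
  if `[< B ((fun i => x.1 i), (fun j => x.2 j)) >] then
    (\bigcap_(i in setT) [set w | a i w = x.1 i]) `&`
    (\bigcap_(j in setT) [set w | b j w = x.2 j]) else set0.
suff -> : [set w | B ((fun i => a i w), (fun j => b j w))] = \bigcup_(x in setT) F x.
  apply: SAbigcupT => // x; rewrite /F; case: asboolP => _; last exact: SA0.
  by apply: SAI => //; apply: SAbigcapT.
apply/seteqP; split=> w /=; last first.
  move=> [x _]; rewrite /F; case: asboolP => // hB [/= h1 h2].
  have -> : (fun i => a i w) = (fun i => x.1 i).
    by apply: funext => i; exact: h1.
  have -> : (fun j => b j w) = (fun j => x.2 j).
    by apply: funext => j; exact: h2.
  exact: hB.
move=> hB; exists ([ffun i => a i w], [ffun j => b j w]) => //.
rewrite /F /=; case: asboolP => [_|].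
  by split=> i _ /=; rewrite (ffunE (fun i => _)).
move=> nB; apply: nB.
have e1 : (fun i => [ffun i0 => a i0 w] i) = (fun i => a i w).
  by apply: funext=> i; rewrite ffunE.
have e2 : (fun j => [ffun j0 => b j0 w] j) = (fun j => b j w).
  by apply: funext=> j; rewrite ffunE.
by rewrite /= e1 e2.
Qed.

Section Main.
Variables (R : realType) (Omega : Type) (I K : finType) (J : {set (I * K)}).
Variables (lam : I -> R) (mu : I * K -> R).
Variables (Ach : I -> R -> Omega -> nat) (Sch : I * K -> R -> Omega -> nat).
Variables (Y : Type) (Ups : Omega -> Y) (borelY : set (set Y)).
Variables (T : I * K -> R -> Omega -> R) (t : R) (uI : I -> R) (uJ : I * K -> R).

Hypothesis ht0 : 0 <= t.
Hypothesis htu : forall i, t <= uI i.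
Hypothesis huJ : forall j, j \in J -> 0 <= uJ j.
Hypothesis hSmono : forall j w x y, j \in J -> 0 <= x -> x <= y ->
  (S_n mu Sch j x w <= S_n mu Sch j y w)%N.
Hypothesis hSrc : forall j w x, j \in J -> 0 <= x -> exists2 e, 0 < e &
  forall y, x <= y -> y < x + e -> S_n mu Sch j y w = S_n mu Sch j x w.
Hypothesis hTmono : forall j w s s', j \in J -> 0 <= s -> s <= s' -> T j s w <= T j s' w.
Hypothesis hTlip : forall j w s s', j \in J -> 0 <= s -> s <= s' ->
  T j s' w <= T j s w + (s' - s).
Hypothesis hT0 : forall j w, j \in J -> T j 0 w = 0.
Hypothesis hTmeas : forall j s c, j \in J -> 0 <= s ->
  F_n J lam mu Ach Sch T Ups borelY s [set w | T j s w <= c].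

Let Gu := G_n J lam mu Ach Sch Ups borelY uI uJ.
Let Sv j x w := S_n mu Sch j x w.
Let Dj j s w := D_n mu Sch T j s w.
Let Fs s := F_n J lam mu Ach Sch T Ups borelY s.

Definition Dv s w : I * K -> nat := fun j => if j \in J then Dj j s w else 0%N.
Definition Av s w : I -> nat := fun i => A_n lam Ach i s w.
Definition Hs s : set Omega := [set w | forall j, j \in J -> T j s w <= uJ j].
Definition Kset (tau : Omega -> R) s : set Omega :=
  [set w | forall s', tau w <= s' -> s' <= s -> forall j, j \in J -> Dj j s' w = Dj j (tau w) w].
Definition Ftau (tau : Omega -> R) := <<s
  [set E | exists s1 s2 (B : set ((I -> nat) * (I * K -> nat))),
     [/\ 0 <= s1 <= t, 0 <= s2 <= t &
         E = (fun w => (Av s1 w, Dv (Num.min s2 (tau w)) w)) @^-1` B]]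
  `|` [set E | exists s, 0 <= s <= t /\ E = [set w | tau w <= s]]
  `|` [set Ups @^-1` B | B in borelY] >>.
Definition goodR tau Yset := [/\ Gu Yset,
  (forall w, Yset w -> 0 <= tau w <= t /\ Hs (tau w) w) &
  (forall E, Ftau tau E -> Gu (E `&` Yset))].

Lemma GuSA : sigma_algebra setT Gu. Proof. exact: gen_SA. Qed.
Lemma FtauSA tau : sigma_algebra setT (Ftau tau). Proof. exact: gen_SA. Qed.

Lemma Gu_A s (B : set (I -> nat)) : 0 <= s <= t -> Gu [set w | B (Av s w)].
Proof.
case/andP=> s0 st; apply: sub_sigma_algebra; left.
exists (fun _ => s), (fun _ => 0), [set p | B p.1]; split => //.
split=> [i|j jJ]; [exact: le_trans st (htu i)|exact: huJ].
Qed.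

Lemma Gu_S j x (B : set nat) : j \in J -> 0 <= x <= uJ j -> Gu [set w | B (Sv j x w)].
Proof.
move=> jJ /andP[x0 xu].
have -> : [set w | B (Sv j x w)] =
  S_vec J lam mu Ach Sch (fun _ => 0) (fun j' => if j' == j then x else 0) @^-1`
    [set p | B (p.2 j)].
  by apply/seteqP; split=> w /=; rewrite jJ eqxx.
apply: sub_sigma_algebra; left; eexists _, _, _; split; last reflexivity.
  split=> [i|j' _]; first exact: lexx.
  by case: eqP.
split=> [i|j' j'J]; first exact: le_trans ht0 (htu i).
by case: eqP => [->//|_]; exact: huJ.
Qed.

Lemma Gu_U B : borelY B -> Gu (Ups @^-1` B).
Proof. by move=> hB; apply: sub_sigma_algebra; right; exists B. Qed.


Lemma T_ge0 j w s : j \in J -> 0 <= s -> 0 <= T j s w.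
Proof. by move=> jJ s0; rewrite -(hT0 _ w jJ); apply: hTmono. Qed.

Lemma Dj_mono j w s s' : j \in J -> 0 <= s -> s <= s' -> (Dj j s w <= Dj j s' w)%N.
Proof.
move=> jJ s0 ss'; apply: hSmono => //; first exact: T_ge0.
exact: hTmono.
Qed.

Lemma Dj_rc j w s : j \in J -> 0 <= s -> exists2 e, 0 < e &
  forall y, s <= y -> y < s + e -> Dj j y w = Dj j s w.
Proof.
move=> jJ s0; have [e e0 he] := hSrc _ w _ jJ (T_ge0 _ w _ jJ s0).
exists e => // y sy ys; apply: he; first exact: hTmono.
apply: (le_lt_trans (hTlip _ w _ _ jJ s0 sy)); rewrite ltrD2l.
by rewrite ltrBlDl.
Qed.

Lemma fin_rc (P : I * K -> R -> Prop) s (l : seq (I * K)) :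
  (forall j, j \in l -> exists2 e, 0 < e & forall y, s <= y -> y < s + e -> P j y) ->
  exists2 e, 0 < e & forall y, s <= y -> y < s + e -> forall j, j \in l -> P j y.
Proof.
elim: l => [|a l IH] h; first by exists 1 => //.
have [e1 e10 h1] := h a (mem_head _ _).
have [e2 e20 h2] : exists2 e, 0 < e & forall y, s <= y -> y < s + e -> forall j, j \in l -> P j y.
  by apply: IH => j jl; apply: h; rewrite in_cons jl orbT.
exists (Num.min e1 e2); first by rewrite lt_min e10 e20.
move=> y sy ys j; rewrite in_cons => /orP[/eqP->|jl].
  by apply: h1 => //; apply: (lt_le_trans ys); rewrite lerD2l ge_min lexx.
by apply: h2 => //; apply: (lt_le_trans ys); rewrite lerD2l ge_min lexx orbT.
Qed.

Lemma Dv_rc w s : 0 <= s -> exists2 e, 0 < e &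
  forall y, s <= y -> y < s + e -> forall j, j \in J -> Dj j y w = Dj j s w.
Proof.
move=> s0.
have h : forall j, j \in enum J -> exists2 e, 0 < e &
    forall y, s <= y -> y < s + e -> (fun j y => Dj j y w = Dj j s w) j y.
  by move=> j; rewrite mem_enum => jJ; exact: Dj_rc.
have [e e0 he] := fin_rc _ _ _ h.
by exists e => // y sy ys j jJ; apply: he => //; rewrite mem_enum.
Qed.

Lemma rat_between (x y : R) : x < y -> exists q : rat, x < ratr q < y.
Proof. by move=> /rat_in_itvoo[q]; rewrite in_itv /= => h; exists q. Qed.

Definition cl j (q : rat) : R := Num.max 0 (Num.min (ratr q) (uJ j)).

Lemma cl_ge0 j q : 0 <= cl j q. Proof. by rewrite /cl le_max lexx. Qed.
Lemma cl_le j q : j \in J -> cl j q <= uJ j.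
Proof. by move=> jJ; rewrite /cl ge_max huJ // ge_min lexx orbT. Qed.

Lemma CL j w x : j \in J -> 0 <= x -> x <= uJ j ->
  exists q : rat, x <= cl j q /\ Sv j (cl j q) w = Sv j x w.
Proof.
move=> jJ x0 xu; have [e e0 he] := hSrc _ w _ jJ x0.
have [xu'|xu'] := ltP x (uJ j); last first.
  have xe : x = uJ j by apply/eqP; rewrite eq_le xu xu'.
  have [q /andP[q1 q2]] : exists q : rat, uJ j < ratr q < uJ j + 1.
    by apply: rat_between; rewrite ltrDl.
  have clq : cl j q = x.
    by rewrite /cl xe (min_r (ltW q1)) max_r // huJ.
  by exists q; rewrite clq.
have [q /andP[q1 q2]] : exists q : rat, x < ratr q < Num.min (x + e) (uJ j).
  by apply: rat_between; rewrite lt_min ltrDl e0 xu'.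
have clq : cl j q = ratr q.
  rewrite /cl min_l; last by apply: ltW; apply: (lt_le_trans q2); rewrite ge_min lexx orbT.
  by rewrite max_r // ltW // (le_lt_trans x0 q1).
exists q; rewrite clq; split; first exact: ltW.
apply: he; first exact: ltW.
by apply: (lt_le_trans q2); rewrite ge_min lexx.
Qed.


Lemma next_ex (tau : Omega -> R) w : exists rho : R, 0 <= tau w <= t ->
  [/\ tau w < rho,
      (forall s, tau w <= s -> s < rho -> s <= t -> forall j, j \in J -> Dj j s w = Dj j (tau w) w) &
      (rho <= t -> exists2 j, j \in J & Dj j rho w <> Dj j (tau w) w)].
Proof.
case: (boolp.EM (0 <= tau w <= t)) => [/andP[tau0 taut]|]; last first.
  by move=> h; exists 0 => h'; exfalso; exact: h.
set ta := tau w.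
pose Cst := [set s | ta <= s <= t /\ forall s', ta <= s' -> s' <= s ->
                 forall j, j \in J -> Dj j s' w = Dj j ta w].
have Cta : Cst ta.
  split; first by rewrite lexx taut.
  by move=> s' h1 h2 j jJ; have -> : s' = ta by apply/eqP; rewrite eq_le h1 h2.
have ubt : ubound Cst t by move=> s [/andP[]].
have hs : has_sup Cst by split; [exists ta | exists t].
set m := sup Cst.
have tam : ta <= m by apply: sup_upper_bound.
have mt : m <= t by apply: ge_sup => //; exists ta.
have hA : forall s, ta <= s -> s < m -> forall j, j \in J -> Dj j s w = Dj j ta w.
  move=> s h1 h2.
  have ms : 0 < m - s by rewrite subr_gt0.
  have [e [_ he] me] := sup_adherent ms hs.
  move: me; rewrite opprB addrC subrK => se.
  by apply: he => //; exact: ltW.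
case: (boolp.EM (exists2 j, j \in J & Dj j m w <> Dj j ta w)) => [hj|hj].
  exists m => _; split; [|by move=> s h1 h2 _; exact: hA|by []].
  rewrite lt_neqAle tam andbT; apply/negP => /eqP tm.
  by case: hj => j jJ; rewrite -tm.
have hm : forall j, j \in J -> Dj j m w = Dj j ta w.
  move=> j jJ; case: (boolp.EM (Dj j m w = Dj j ta w)) => // h; exfalso; apply: hj; by exists j.
have Km : forall s', ta <= s' -> s' <= m -> forall j, j \in J -> Dj j s' w = Dj j ta w.
  move=> s' h1; rewrite le_eqVlt => /orP[/eqP->|h2]; first exact: hm.
  exact: hA.
have mt' : m = t.
  apply/eqP; rewrite eq_le mt /= leNgt; apply/negP => mlt.
  have [e e0 he] := Dv_rc w m (le_trans tau0 tam).
  pose m' := Num.min (m + e / 2) t.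
  have mm' : m < m'.
    by rewrite lt_min mlt andbT ltrDl divr_gt0.
  have Cm' : Cst m'.
    split; first by rewrite (le_trans tam (ltW mm')) ge_min lexx orbT.
    move=> s' h1 h2 j jJ; have [s'm|ms'] := leP s' m; first exact: Km.
    rewrite -(hm j jJ); apply: he => //; first exact: ltW.
    apply: (le_lt_trans h2); rewrite /m' gt_min; apply/orP; left.
    by rewrite ltrD2l ltr_pdivrMr // ltr_pMr // ltr1n.
  have := sup_upper_bound hs Cm'; rewrite -/m => h.
  by move: (lt_le_trans mm' h); rewrite ltxx.
exists (t + 1) => _; split.
- by apply: (le_lt_trans taut); rewrite ltrDl.
- move=> s h1 _ st; apply: Km => //; by rewrite mt'.
- by move=> h; exfalso; move: h; rewrite leNgt ltrDl ltr01.
Qed.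


Definition next tau : Omega -> R := projT1 (boolp.choice (next_ex tau)).

Lemma next_spec tau w : 0 <= tau w <= t ->
  [/\ tau w < next tau w,
      (forall s, tau w <= s -> s < next tau w -> s <= t -> forall j, j \in J -> Dj j s w = Dj j (tau w) w) &
      (next tau w <= t -> exists2 j, j \in J & Dj j (next tau w) w <> Dj j (tau w) w)].
Proof. exact: (projT2 (boolp.choice (next_ex tau)) w). Qed.

Lemma K_iff tau w s : 0 <= tau w <= t -> s <= t -> (Kset tau s w <-> s < next tau w).
Proof.
move=> ht st; have [h1 h2 h3] := next_spec _ _ ht; split.
  move=> hK; rewrite ltNge; apply/negP => ns.
  have [j jJ hj] := h3 (le_trans ns st); apply: hj; apply: hK => //.
  exact: ltW.
by move=> sn s' h4 h5 j jJ; apply: h2 => //; [exact: (le_lt_trans h5 sn)|exact: (le_trans h5 st)].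
Qed.

Lemma eqI_iff {A B C : set Omega} : A `&` C = B `&` C -> forall w, C w -> (A w <-> B w).
Proof.
move=> h w Cw; split=> [Aw|Bw].
  by have : (A `&` C) w by []; rewrite h => -[].
by have : (B `&` C) w by []; rewrite -h => -[].
Qed.

Lemma iff_eqI {A B C : set Omega} : (forall w, C w -> (A w <-> B w)) -> A `&` C = B `&` C.
Proof.
move=> h; apply/seteqP; split=> w [h1 h2]; split=> //; exact/(h w h2).
Qed.

Lemma TL tau s : 0 <= s <= t ->
  forall E, Fs s E -> exists E', Ftau tau E' /\ E `&` Kset tau s = E' `&` Kset tau s.
Proof.
move=> /andP[s0 st].
pose C := [set E : set Omega | exists E', Ftau tau E' /\ E `&` Kset tau s = E' `&` Kset tau s].
have SC : sigma_algebra setT C.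
  split.
  - by exists set0; split => //; exact: SA0 (FtauSA tau).
  - move=> A [E' [hE' hA]]; exists (setT `\` E'); split.
      by rewrite setTD; apply: (SAC (FtauSA tau)).
    apply: iff_eqI => w Kw; have := eqI_iff hA w Kw.
    by rewrite /setD /= => ->.
  - move=> F hF.
    have [G hG] := boolp.choice hF.
    exists (\bigcup_n G n); split.
      by apply: SAbigcup => [|n]; [exact: FtauSA|exact: (hG n).1].
    apply: iff_eqI => w Kw; split=> -[n _ h]; exists n => //.
      by apply/(eqI_iff (hG n).2 w Kw).
    by apply/(eqI_iff (hG n).2 w Kw).
apply: (smallest_sub SC) => E [[s' [B [/andP[s'0 s's] ->]]]|[B hB <-]].
  exists ((fun w => (Av s' w, Dv (Num.min s' (tau w)) w)) @^-1` B); split.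
    apply: sub_sigma_algebra; left; left; exists s', s', B; split => //.
      by rewrite s'0 (le_trans s's st).
    by rewrite s'0 (le_trans s's st).
  apply: iff_eqI => w Kw /=.
  suff -> : Dv (Num.min s' (tau w)) w = (fun j => if j \in J then D_n mu Sch T j s' w else 0%N) by [].
  apply: funext => j; rewrite /Dv; case: ifP => // jJ.
  have [ts'|s't] := leP (tau w) s'.
    by symmetry; exact: (Kw s' ts' s's j jJ).
  by [].
exists (Ups @^-1` B); split => //.
by apply: sub_sigma_algebra; right; exists B.
Qed.


Lemma Dv_lvl (A : set (set Omega)) (SA : sigma_algebra setT A) (s' : Omega -> R) j n :
  (j \in J -> A [set w | Dj j (s' w) w = n]) -> A [set w | Dv (s' w) w j = n].
Proof.
rewrite /Dv; case: (boolp.EM (j \in J)) => jJ.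
  by move=> h; apply: (SAeq (h jJ)); apply/seteqP; split=> w /=; rewrite jJ.
have jJ' : j \in J = false by apply/negP.
by move=> _; apply: (SAeq (SA_prop SA (0%N = n))); apply/seteqP; split=> w /=; rewrite jJ'.
Qed.

Lemma good0 : goodR (fun _ => 0) setT.
Proof.
split.
- exact: SAT GuSA.
- move=> w _; rewrite lexx ht0; split => // j jJ; rewrite hT0 //; exact: huJ.
move=> E hE; rewrite setIT; move: E hE; apply: smallest_sub; first exact: GuSA.
move=> E [[[s1 [s2 [B [/andP[s10 s1t] /andP[s20 s2t] ->]]]]|[s [_ ->]]]|[B hB <-]].
- have := DL _ GuSA _ _ (fun i w => Av s1 w i) (fun j w => Dv (Num.min s2 0) w j) _ _ B; apply.
    by move=> i n; apply: (Gu_A s1 [set f | f i = n]); rewrite s10.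
  move=> j n; apply: Dv_lvl; first exact: GuSA.
  move=> jJ; rewrite (min_r s20).
  apply: (SAeq (Gu_S j 0 [set m | m = n] jJ _)); last first.
    by apply/seteqP; split=> w /=; rewrite /Dj /D_n hT0.
  by rewrite lexx huJ.
- exact: SA_prop GuSA _.
- exact: Gu_U.
Qed.


Lemma trace_eq (Yset P Q : set Omega) : (forall w, Yset w -> (P w <-> Q w)) ->
  Gu (P `&` Yset) -> Gu (Q `&` Yset).
Proof. by move=> h; rewrite (iff_eqI h). Qed.

Lemma Dtau_lvl tau Yset j n : goodR tau Yset -> j \in J ->
  Gu ([set w | Dj j (tau w) w = n] `&` Yset).
Proof.
case=> GY hY hF jJ.
have G1 : Gu ((fun w => (Av 0 w, Dv (Num.min t (tau w)) w)) @^-1` [set p | p.2 j = n] `&` Yset).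
  apply: hF; apply: sub_sigma_algebra; left; left; exists 0, t, [set p | p.2 j = n].
  by split => //; rewrite lexx ht0.
move: G1; apply: trace_eq => w Yw.
have [/andP[_ h] _] := hY w Yw.
by rewrite /= /Dv jJ (min_r h).
Qed.

Lemma FCR tau Yset s : goodR tau Yset -> 0 <= s <= t ->
  Gu (Yset `&` Kset tau s `&` Hs s) /\
  (forall j c, j \in J -> Gu ([set w | T j s w <= c] `&` (Yset `&` Kset tau s `&` Hs s))).
Proof.
move=> gd /andP[s0 st]; case: (gd) => GY hY hF.
have hE : forall x : (I * K) * R * R, exists E' : set Omega,
    x.1.1 \in J -> 0 <= x.1.2 <= t -> Ftau tau E' /\
    [set w | T x.1.1 x.1.2 w <= x.2] `&` Kset tau x.1.2 = E' `&` Kset tau x.1.2.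
  move=> [[j s'] c] /=.
  case: (boolp.EM (j \in J /\ 0 <= s' <= t)) => [[jJ hs']|hn].
    have [E' hE'] := TL tau s' hs' _ (hTmeas _ _ c jJ (andP hs').1).
    by exists E'.
  by exists set0 => jJ hs'; exfalso; apply: hn.
have [E'f hE'f] := boolp.choice hE.
pose E' j s c := E'f (j, s, c).
have hE' : forall j s' c, j \in J -> 0 <= s' <= t -> Ftau tau (E' j s' c) /\
    [set w | T j s' w <= c] `&` Kset tau s' = E' j s' c `&` Kset tau s'.
  by move=> j s' c; apply: (hE'f (j, s', c)).
pose TrY := [set E : set Omega | Gu (E `&` Yset)].
have STr : sigma_algebra setT TrY := @trace_SA _ _ GuSA _ GY.
have GuTr : forall E, Gu E -> TrY E by move=> E hE0; exact: (SAI GuSA).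
have FTr : forall E, Ftau tau E -> TrY E by [].
pose Ca := [set w | forall j, j \in J -> E' j s (uJ j) w].
pose Cb := [set w | forall j, j \in J -> exists q : rat,
   E' j s (cl j q) w /\ (Sv j (cl j q) w <= Dj j (tau w) w)%N].
pose Cc := [set w | forall j, j \in J -> forall q1 q : rat, 0 <= (ratr q1 : R) -> ratr q1 < s ->
   tau w <= ratr q1 -> E' j s (cl j q) w -> E' j (ratr q1) (cl j q) w].
have sst : 0 <= s <= t by rewrite s0 st.
have key : Yset `&` Kset tau s `&` Hs s = (Ca `&` Cb `&` Cc) `&` Yset.
  apply/seteqP; split=> w.
  - move=> [[Yw Kw] Hw]; have [/andP[tau0 taut] Htau] := hY w Yw.
    split => //; split; first split.
    + move=> j jJ; exact: (eqI_iff (hE' j s _ jJ sst).2 w Kw).1 (Hw j jJ).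
    + move=> j jJ.
      have x0 := T_ge0 j w s jJ s0.
      have [q [xq Sq]] := CL j w (T j s w) jJ x0 (Hw j jJ).
      exists q; split; first exact: (eqI_iff (hE' j s _ jJ sst).2 w Kw).1 xq.
      rewrite Sq; change (Dj j s w <= Dj j (tau w) w)%N.
      have [ts|st'] := leP (tau w) s.
        by rewrite (Kw s ts (lexx s) j jJ).
      exact: Dj_mono j w s (tau w) jJ s0 (ltW st').
    + move=> j jJ q1 q h1 h2 h3 hEq.
      have q1t : 0 <= (ratr q1 : R) <= t by rewrite h1 (le_trans (ltW h2) st).
      have Tq : T j s w <= cl j q := (eqI_iff (hE' j s _ jJ sst).2 w Kw).2 hEq.
      have Kq1 : Kset tau (ratr q1) w.
        by move=> s' a b; apply: Kw => //; exact: (le_trans b (ltW h2)).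
      apply: (eqI_iff (hE' j (ratr q1) _ jJ q1t).2 w Kq1).1.
      exact: le_trans (hTmono j w _ _ jJ h1 (ltW h2)) Tq.
  - move=> [[[Caw Cbw] Ccw] Yw]; have [htw Htau] := hY w Yw.
    have /andP[tau0 taut] := htw.
    have Kw : Kset tau s w.
      apply/(K_iff tau w s htw st); rewrite ltNge; apply/negP => ns.
      have [h1 h2 h3] := next_spec tau w htw.
      have [j jJ hj] := h3 (le_trans ns st).
      have [q [Eq Sq]] := Cbw j jJ.
      have Tr : T j (next tau w) w <= cl j q.
        rewrite leNgt; apply/negP => hlt.
        have [q1 /andP[l1 l2]] : exists q1 : rat,
            Num.max (tau w) (next tau w - (T j (next tau w) w - cl j q)) < ratr q1 < next tau w.
          by apply: rat_between; rewrite gt_max h1 /= ltrBlDr ltrDl subr_gt0.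
        move: l1; rewrite gt_max => /andP[l1 l3].
        have q10 : 0 <= (ratr q1 : R) by apply: (le_trans tau0); exact: ltW.
        have q1t : 0 <= (ratr q1 : R) <= t.
          by rewrite q10 (le_trans (ltW l2) (le_trans ns st)).
        have Eq1 := Ccw j jJ q1 q q10 (lt_le_trans l2 ns) (ltW l1) Eq.
        have Kq1 : Kset tau (ratr q1) w.
          by apply/(K_iff tau w _ htw (andP q1t).2).
        have Tq1 := (eqI_iff (hE' j (ratr q1) _ jJ q1t).2 w Kq1).2 Eq1.
        have := hTlip j w (ratr q1) (next tau w) jJ q10 (ltW l2).
        have Tq1' : T j (ratr q1) w <= cl j q := Tq1; move: Tq1' l3 hlt; lra.
      have a : (Dj j (next tau w) w <= Dj j (tau w) w)%N.
        apply: leq_trans Sq; apply: hSmono => //.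
        apply: T_ge0 => //; exact: (le_trans tau0 (ltW h1)).
      have b := Dj_mono j w (tau w) (next tau w) jJ tau0 (ltW h1).
      by apply: hj; apply/eqP; rewrite eqn_leq a b.
    split; first by split.
    move=> j jJ; exact: (eqI_iff (hE' j s _ jJ sst).2 w Kw).2 (Caw j jJ).
have GC : Gu (Yset `&` Kset tau s `&` Hs s).
  rewrite key; change (TrY (Ca `&` Cb `&` Cc)).
  apply: (SAI STr); first apply: (SAI STr).
  - apply: (SA_forallp STr) => j jJ; apply: FTr; exact: (hE' j s (uJ j) jJ sst).1.
  - apply: (SA_forallp STr) => j jJ; apply: (SA_exists STr) => q.
    apply: (SA_and STr); first by apply: FTr; exact: (hE' j s _ jJ sst).1.
    apply: (SAeq (E1 := [set w | exists n : nat, (Sv j (cl j q) w <= n)%N /\ Dj j (tau w) w = n])).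
      apply: (SA_exists STr) => n; apply: (SA_and STr).
        apply: GuTr; apply: (Gu_S j (cl j q) [set m | (m <= n)%N] jJ).
        by rewrite cl_ge0 cl_le.
      exact: Dtau_lvl gd jJ.
    by apply/seteqP; split=> w /=; [move=> [n [h1 h2]]; rewrite h2|move=> h; exists (Dj j (tau w) w)].
  - apply: (SA_forallp STr) => j jJ; apply: (SA_forall STr) => q1; apply: (SA_forall STr) => q.
    case: (boolp.EM (0 <= (ratr q1 : R) /\ ratr q1 < s)) => [[h1 h2]|hn]; last first.
      apply: (SAeq (SAT STr)); apply/seteqP; split=> w //= _ h1 h2; exfalso; exact: hn.
    have q1t : 0 <= (ratr q1 : R) <= t by rewrite h1 (le_trans (ltW h2) st).
    apply: (SA_impl STr); first exact: (SA_prop STr).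
    apply: (SA_impl STr); first exact: (SA_prop STr).
    apply: (SA_impl STr).
      by apply: FTr; apply: sub_sigma_algebra; left; right; exists (ratr q1).
    apply: (SA_impl STr); apply: FTr; first exact: (hE' j s _ jJ sst).1.
    exact: (hE' j _ _ jJ q1t).1.
split => // j c jJ.
have -> : [set w | T j s w <= c] `&` (Yset `&` Kset tau s `&` Hs s) =
          (E' j s c `&` Yset) `&` (Yset `&` Kset tau s `&` Hs s).
  apply/seteqP; split=> w [h1 h2]; have [[h2Y h3] _] := h2; split => //.
    by split => //; exact: (eqI_iff (hE' j s c jJ sst).2 w h3).1.
  exact: (eqI_iff (hE' j s c jJ sst).2 w h3).2 h1.1.
by apply: (SAI GuSA) => //; apply: hF; exact: (hE' j s c jJ sst).1.
Qed.


Definition clt (q : rat) : R := Num.max 0 (Num.min (ratr q) t).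
Lemma clt_ge0 q : 0 <= clt q. Proof. by rewrite /clt le_max lexx. Qed.
Lemma clt_le q : clt q <= t. Proof. by rewrite /clt ge_max ht0 ge_min lexx orbT. Qed.
Lemma cltE q : 0 <= (ratr q : R) -> ratr q <= t -> clt q = ratr q.
Proof. by move=> h1 h2; rewrite /clt (min_l h2) (max_r h1). Qed.

Lemma Sle_Dtau tau Yset j x : goodR tau Yset -> j \in J -> 0 <= x <= uJ j ->
  Gu ([set w | (Sv j x w <= Dj j (tau w) w)%N] `&` Yset).
Proof.
move=> gd jJ hx; case: (gd) => GY _ _.
have STr := @trace_SA _ _ GuSA _ GY.
apply: (SAeq (E1 := [set w | exists n : nat, (Sv j x w <= n)%N /\ Dj j (tau w) w = n] `&` Yset)).
  change ([set E | Gu (E `&` Yset)] [set w | exists n : nat, (Sv j x w <= n)%N /\ Dj j (tau w) w = n]).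
  apply: (SA_exists STr) => n; apply: (SA_and STr).
    exact: (SAI GuSA) (Gu_S j x [set m | (m <= n)%N] jJ hx) GY.
  exact: Dtau_lvl gd jJ.
apply/seteqP; split=> w /= [h hY]; split => //.
  by case: h => n [h1 h2]; rewrite h2.
by exists (Dj j (tau w) w).
Qed.

Lemma Jump tau Yset : goodR tau Yset ->
  goodR (next tau) (Yset `&` [set w | next tau w <= t /\ Hs (next tau w) w]).
Proof.
move=> gd; case: (gd) => GY hY hF.
pose Ys s := Yset `&` Kset tau s `&` Hs s.
have GYs : forall s, 0 <= s <= t -> Gu (Ys s) by move=> s hs; exact: (FCR tau Yset s gd hs).1.
have GTs : forall s j c, 0 <= s <= t -> j \in J -> Gu ([set w | T j s w <= c] `&` Ys s).
  by move=> s j c hs jJ; exact: (FCR tau Yset s gd hs).2 j c jJ.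
pose Y' := Yset `&` [set w | next tau w <= t /\ Hs (next tau w) w].
have Ys_iff : forall w s, Yset w -> 0 <= s <= t -> (Ys s w <-> s < next tau w /\ Hs s w).
  move=> w s Yw /andP[s0 st]; have [htw _] := hY w Yw; split.
    by move=> [[_ Kw] Hw]; split => //; apply/(K_iff tau w s htw st).
  by move=> [h1 h2]; split => //; split => //; apply/(K_iff tau w s htw st).
have Y'_next : forall w, Y' w -> 0 <= tau w <= t /\ tau w < next tau w.
  move=> w [Yw _]; have [htw _] := hY w Yw; split => //.
  by have [] := next_spec tau w htw.
have Ys'_iff : forall w s, Y' w -> 0 <= s <= t -> (Ys s w <-> s < next tau w).
  move=> w s Y'w hs; have [Yw [nt Hn]] := Y'w; rewrite (Ys_iff w s Yw hs); split => [[]//|sn].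
  split => // j jJ; apply: le_trans (Hn j jJ); apply: hTmono => //; first by case/andP: hs.
  exact: ltW.
pose Th j c w := forall q : rat, Ys (clt q) w -> T j (clt q) w <= c.
pose Dle j n w := exists q : rat, Th j (cl j q) w /\ (Sv j (cl j q) w <= n)%N.
have F1 : forall w j c, Y' w -> j \in J -> Th j c w -> T j (next tau w) w <= c.
  move=> w j c Y'w jJ hTh.
  have [htw taun] := Y'_next w Y'w; have [Yw [nt Hn]] := Y'w.
  have /andP[tau0 taut] := htw.
  rewrite leNgt; apply/negP => hlt.
  have [q1 /andP[l1 l2]] : exists q1 : rat,
      Num.max (tau w) (next tau w - (T j (next tau w) w - c)) < ratr q1 < next tau w.
    by apply: rat_between; rewrite gt_max taun /= ltrBlDr ltrDl subr_gt0.
  move: l1; rewrite gt_max => /andP[l1 l3].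
  have q10 : 0 <= (ratr q1 : R) by apply: (le_trans tau0); exact: ltW.
  have q1t : 0 <= (ratr q1 : R) <= t by rewrite q10 (le_trans (ltW l2) nt).
  have Yq : Ys (clt q1) w.
    by rewrite cltE //; [apply/(Ys'_iff w _ Y'w q1t)|case/andP: q1t].
  have := hTh q1 Yq; rewrite cltE //; last by case/andP: q1t.
  move=> Tq1; have := hTlip j w (ratr q1) (next tau w) jJ q10 (ltW l2).
  by move: Tq1 l3 hlt; lra.
have cltr : forall q, 0 <= clt q <= t by move=> q; rewrite clt_ge0 clt_le.
have F2 : forall w j c, Y' w -> j \in J -> T j (next tau w) w <= c -> Th j c w.
  move=> w j c Y'w jJ hc q Yq.
  have hq := (Ys'_iff w _ Y'w (cltr q)).1 Yq.
  exact: le_trans (hTmono j w _ _ jJ (clt_ge0 q) (ltW hq)) hc.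
have Dle_iff : forall w j n, Y' w -> j \in J -> (Dle j n w <-> (Dj j (next tau w) w <= n)%N).
  move=> w j n Y'w jJ.
  have [/andP[tau0 _] taun] := Y'_next w Y'w.
  have next0 : 0 <= next tau w by apply: (le_trans tau0); exact: ltW.
  split.
    move=> [q [hT hS]]; have Tn := F1 w j _ Y'w jJ hT.
    change (Sv j (T j (next tau w) w) w <= n)%N.
    exact: leq_trans (hSmono j w _ _ jJ (T_ge0 j w _ jJ next0) Tn) hS.
  move=> hD; have x0 := T_ge0 j w _ jJ next0.
  have xu := Y'w.2.2 j jJ.
  have [q [xq Sq]] := CL j w _ jJ x0 xu.
  by exists q; split; [exact: F2 w j _ Y'w jJ xq|rewrite Sq].
pose TrY := [set E : set Omega | Gu (E `&` Yset)].
have STr : sigma_algebra setT TrY := @trace_SA _ _ GuSA _ GY.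
have GuTr : forall E, Gu E -> TrY E by move=> E hE0; exact: (SAI GuSA).
have ThTr : forall j c, j \in J -> TrY (Th j c).
  move=> j c jJ; rewrite /Th; apply: (SA_forall STr) => q.
  apply: (SA_impl' STr); first exact: GuTr (GYs _ (cltr q)).
  exact: GuTr (GTs _ j c (cltr q) jJ).
have DleTr : forall j n, j \in J -> TrY (Dle j n).
  move=> j n jJ; rewrite /Dle; apply: (SA_exists STr) => q.
  apply: (SA_and STr); first exact: ThTr.
  apply: GuTr; apply: (Gu_S j (cl j q) [set m | (m <= n)%N] jJ).
  by rewrite cl_ge0 cl_le.
pose Jset := [set w | exists j, j \in J /\ ~ Dle j (Dj j (tau w) w) w].
have key : Y' = Jset `&` Yset.
  apply/seteqP; split=> w.
    move=> Y'w; have [Yw _] := Y'w; split => //.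
    have [htw taun] := Y'_next w Y'w; have /andP[tau0 _] := htw.
    have [_ _ h3] := next_spec tau w htw.
    have [j jJ hj] := h3 Y'w.2.1.
    exists j; split => //; move/(Dle_iff w j _ Y'w jJ) => a.
    have b := Dj_mono j w (tau w) (next tau w) jJ tau0 (ltW taun).
    by apply: hj; apply/eqP; rewrite eqn_leq a b.
  move=> [[j [jJ nD]] Yw]; split => //.
  have [htw Htau] := hY w Yw; have /andP[tau0 taut] := htw.
  have [taun _ _] := next_spec tau w htw.
  case: (boolp.EM (next tau w <= t /\ Hs (next tau w) w)) => // hn; exfalso; apply: nD.
  pose A := [set s | 0 <= s <= t /\ Ys s w].
  have Atau : A (tau w).
    by split => //; apply/(Ys_iff w _ Yw htw).
  have hs : has_sup A by split; [exists (tau w)|exists t => s [/andP[]]].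
  set m := sup A.
  have Aub : forall s, A s -> s <= m by move=> s As; exact: sup_upper_bound.
  have taum : tau w <= m := Aub _ Atau.
  have mt : m <= t by apply: ge_sup; [exists (tau w)|move=> s [/andP[]]].
  have m0 : 0 <= m := le_trans tau0 taum.
  have Hm : Hs m w.
    move=> j' j'J; rewrite leNgt; apply/negP => hlt.
    have eps0 : 0 < T j' m w - uJ j' by rewrite subr_gt0.
    have [e [/andP[e0 et] Ye] me] := sup_adherent eps0 hs.
    have em : e <= m by apply: Aub; split => //; rewrite e0 et.
    have He := ((Ys_iff w e Yw (introT andP (conj e0 et))).1 Ye).2 j' j'J.
    have := hTlip j' w e m j'J e0 em.
    by move: He me hlt; rewrite -/m; lra.
  have mn : m < next tau w.
    rewrite ltNge; apply/negP => nm; apply: hn; split; first exact: le_trans nm mt.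
    move=> j' j'J; apply: le_trans (Hm j' j'J); apply: hTmono => //.
    exact: le_trans tau0 (ltW taun).
  have Ym : Ys m w by apply/(Ys_iff w _ Yw (introT andP (conj m0 mt))).
  have Km : Kset tau m w := Ym.1.2.
  have x0 := T_ge0 j w m jJ m0.
  have [q [xq Sq]] := CL j w _ jJ x0 (Hm j jJ).
  exists q; split.
    move=> q' Yq'; have h := Aub (clt q') (conj (cltr q') Yq').
    exact: le_trans (hTmono j w _ _ jJ (clt_ge0 q') h) xq.
  rewrite Sq; change (Dj j m w <= Dj j (tau w) w)%N.
  by rewrite (Km m taum (lexx m) j jJ).
have GY' : Gu Y'.
  rewrite key; change (TrY Jset); apply: (SA_exists STr) => j.
  case: (boolp.EM (j \in J)) => jJ; last first.
    by apply: (SAeq (SA0 STr)); apply/seteqP; split=> w //= [h _]; exact: jJ h.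
  apply: (SA_and STr); first exact: (SA_prop STr).
  apply: (SAC STr).
  apply: (SAeq (E1 := [set w | exists n, Dj j (tau w) w = n /\ Dle j n w])).
    apply: (SA_exists STr) => n; apply: (SA_and STr); last exact: DleTr.
    exact: Dtau_lvl gd jJ.
  by apply/seteqP; split=> w /=; [move=> [n [<-]]|move=> h; exists (Dj j (tau w) w)].
split => //.
  by move=> w Y'w; have [[/andP[h0 _] h1] [h2 h3]] := (Y'_next w Y'w, Y'w.2); split => //; rewrite h2 andbT (le_trans h0 (ltW h1)).
pose TrY' := [set E : set Omega | Gu (E `&` Y')].
have STr' : sigma_algebra setT TrY' := @trace_SA _ _ GuSA _ GY'.
have Tr_Tr' : forall E, TrY E -> TrY' E.
  move=> E hE; change (Gu (E `&` Y')); have -> : E `&` Y' = (E `&` Yset) `&` Y'.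
    by apply/seteqP; split=> w [h1 h2]; split => //; [split => //; case: h2|case: h1].
  exact: (SAI GuSA) hE GY'.
move=> E hE; move: E hE; apply: smallest_sub; first exact: STr'.
move=> E [[[s1 [s2 [B [/andP[s10 s1t] /andP[s20 s2t] ->]]]]|[s [/andP[s0 st] ->]]]|[B hB <-]].
- pose P1 := (fun w => (Av s1 w, Dv (Num.min s2 (tau w)) w)) @^-1` B.
  pose P2 := [set w | B (Av s1 w, Dv (next tau w) w)].
  have hs2 : 0 <= s2 <= t by rewrite s20 s2t.
  have hP1 : TrY P1.
    apply: hF; apply: sub_sigma_algebra; left; left; exists s1, s2, B.
    by split => //; rewrite ?s10 ?s1t ?s20 ?s2t.
  have hP2 : TrY' P2.
    have := DL _ STr' _ _ (fun i w => Av s1 w i) (fun j w => Dv (next tau w) w j) _ _ B; apply.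
      move=> i n; apply: Tr_Tr'; apply: GuTr; apply: (Gu_A s1 [set f | f i = n]).
      by rewrite s10.
    move=> j n; apply: (Dv_lvl _ STr') => jJ.
    apply: (trace_eq _ [set w | Dle j n w /\ forall m : nat, (m < n)%N -> ~ Dle j m w] _).
      move=> w Y'w /=; rewrite (Dle_iff w j n Y'w jJ); split.
        by move=> [h1 h2]; apply/eqP; rewrite eqn_leq h1 /= leqNgt; apply/negP => /h2; apply; exact/(Dle_iff w j _ Y'w jJ).
      move=> h; split; first by rewrite h.
      by move=> m mn /(Dle_iff w j _ Y'w jJ); rewrite h leqNgt mn.
    change (TrY' [set w | Dle j n w /\ forall m : nat, (m < n)%N -> ~ Dle j m w]).
    apply: (SA_and STr'); first exact: Tr_Tr' _ (DleTr j n jJ).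
    apply: (SA_forall STr') => m; apply: (SA_impl STr'); first exact: (SA_prop STr').
    exact: (SAC STr') (Tr_Tr' _ (DleTr j m jJ)).
  apply: (trace_eq _ ((P1 `&` Ys s2) `|` (P2 `&` ~` Ys s2)) _).
    move=> w Y'w /=; have [Yw _] := Y'w.
    case: (boolp.EM (Ys s2 w)) => hY2.
      have sn := (Ys'_iff w s2 Y'w hs2).1 hY2.
      have -> : Dv (Num.min s2 (next tau w)) w = Dv (Num.min s2 (tau w)) w.
        apply: funext => j; rewrite /Dv; case: ifP => // jJ.
        rewrite (min_l (ltW sn)); have [ts|st'] := leP (tau w) s2 => //.
        exact: hY2.1.2 s2 ts (lexx s2) j jJ.
      split; last by move=> h; left.
      by case=> [[h _]|[_ h]]; [exact: h|exfalso; exact: h hY2].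
    have ns : next tau w <= s2.
      by rewrite leNgt; apply/negP => /(Ys'_iff w s2 Y'w hs2).
    rewrite (min_r ns); split; last by move=> h; right.
    by case=> [[_ h]|[h _]]; [exfalso; exact: hY2 h|exact: h].
  change (TrY' ((P1 `&` Ys s2) `|` (P2 `&` ~` Ys s2))).
  apply: (SAU STr').
    exact: (SAI STr') (Tr_Tr' _ hP1) (Tr_Tr' _ (GuTr _ (GYs s2 hs2))).
  exact: (SAI STr') hP2 (SAC STr' _ (Tr_Tr' _ (GuTr _ (GYs s2 hs2)))).
- have hs : 0 <= s <= t by rewrite s0 st.
  apply: (trace_eq _ (~` Ys s) _).
    move=> w Y'w /=; rewrite (Ys'_iff w s Y'w hs) leNgt; split.
      by move=> h; apply/negP.
    by move/negP.
  exact: (SAC STr' _ (Tr_Tr' _ (GuTr _ (GYs s hs)))).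
- exact: Tr_Tr' _ (GuTr _ (Gu_U B hB)).
Qed.


Fixpoint stage (k : nat) : (Omega -> R) * set Omega :=
  match k with
  | 0%N => (fun _ => 0, setT)
  | k'.+1 => let p := stage k' in
      (next p.1, p.2 `&` [set w | next p.1 w <= t /\ Hs (next p.1 w) w])
  end.

Lemma stage_good k : goodR (stage k).1 (stage k).2.
Proof. by elim: k => [|k IH] /=; [exact: good0|exact: Jump]. Qed.

Lemma sum_lt (a b : I * K -> nat) j0 : j0 \in J -> (forall j, j \in J -> (a j <= b j)%N) ->
  (a j0 < b j0)%N -> (\sum_(j in J) a j < \sum_(j in J) b j)%N.
Proof.
move=> j0J hle hlt; rewrite (bigD1 j0) //= [X in (_ < X)%N](bigD1 j0) //=.
apply: (@leq_trans (b j0 + \sum_(i in J | i != j0) a i)%N); first by rewrite ltn_add2r.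
by rewrite leq_add2l; apply: leq_sum => i /andP[iJ _]; exact: hle.
Qed.

Lemma cover w : Hs t w -> exists k, (stage k).2 w /\ Kset (stage k).1 t w.
Proof.
move=> Ht.
pose Mv s := (\sum_(j in J) Dj j s w)%N.
have Mmono : forall s s', 0 <= s -> s <= s' -> (Mv s <= Mv s')%N.
  by move=> s s' s0 ss'; apply: leq_sum => j jJ; exact: Dj_mono.
have claim : forall k, (exists k', (stage k').2 w /\ Kset (stage k').1 t w) \/
    ((stage k).2 w /\ (k <= Mv ((stage k).1 w))%N).
  elim=> [|k [IH|[Yk hk]]]; first by right.
  - by left.
  have [_ hYk _] := stage_good k; have [htw _] := hYk w Yk.
  case: (boolp.EM (Kset (stage k).1 t w)) => hK; first by left; exists k.
  right.
  have nt : next (stage k).1 w <= t.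
    by rewrite leNgt; apply/negP => /(K_iff _ _ _ htw (lexx t)).
  have [h1 _ h3] := next_spec _ _ htw.
  have /andP[tau0 _] := htw.
  have n0 : 0 <= next (stage k).1 w by apply: (le_trans tau0); exact: ltW.
  split.
    split => //; split => // j jJ; apply: le_trans (Ht j jJ); exact: hTmono.
  have [j0 j0J hj0] := h3 nt; have j0J' := j0J.
  apply: (leq_ltn_trans hk); rewrite /=.
  apply: sum_lt j0J _ _.
    by move=> j jJ; exact: (Dj_mono j w _ _ jJ tau0 (ltW h1)).
  rewrite ltn_neqAle; apply/andP; split; last exact: (Dj_mono j0 w _ _ j0J' tau0 (ltW h1)).
  by apply/eqP => h; apply: hj0; rewrite h.
have [|[Yk hk]] := claim (Mv t).+1; first by [].
have [_ hYk _] := stage_good (Mv t).+1.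
have [/andP[tau0 taut] _] := hYk w Yk.
by have := leq_trans hk (Mmono _ _ tau0 taut); rewrite ltnn.
Qed.

Lemma H_meas : Gu (Hs t).
Proof.
have -> : Hs t = \bigcup_k ((stage k).2 `&` Kset (stage k).1 t `&` Hs t).
  apply/seteqP; split=> w.
    by move=> Ht; have [k [h1 h2]] := cover w Ht; exists k.
  by move=> [k _ [_ h]].
apply: (SAbigcup GuSA) => k.
have ht : 0 <= t <= t by rewrite ht0 lexx.
exact: (FCR _ _ t (stage_good k) ht).1.
Qed.

End Main.

Lemma ren_mono {R : realType} {Omega : Type} {xi : nat -> Omega -> R} {N : R -> Omega -> nat} :
  (forall t w m, 0 <= t -> (m <= N t w)%N = (\sum_(k < m) xi k w <= t)) ->
  forall w x y, 0 <= x -> x <= y -> (N x w <= N y w)%N.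
Proof.
move=> h w x y x0 xy; rewrite (h y w _ (le_trans x0 xy)); apply: le_trans xy.
by rewrite -(h x w _ x0).
Qed.

Lemma ren_rc {R : realType} {Omega : Type} {xi : nat -> Omega -> R} {N : R -> Omega -> nat} :
  (forall t w m, 0 <= t -> (m <= N t w)%N = (\sum_(k < m) xi k w <= t)) ->
  forall w x, 0 <= x -> exists2 e, 0 < e & forall y, x <= y -> y < x + e -> N y w = N x w.
Proof.
move=> h w x x0; set m := N x w.
have hlt : x < \sum_(k < m.+1) xi k w by rewrite ltNge -(h x w _ x0) ltnn.
exists (\sum_(k < m.+1) xi k w - x); first by rewrite subr_gt0.
move=> y xy ylt; apply/eqP; rewrite eqn_leq (ren_mono h w _ _ x0 xy) andbT.
rewrite leqNgt; apply/negP => hm; move: hm; rewrite /leq.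
change ((m.+1 <= N y w)%N -> False); rewrite (h y w _ (le_trans x0 xy)).
by move: ylt; rewrite addrC subrK => ylt /(lt_le_trans ylt); rewrite ltxx.
Qed.

Theorem lemma5p3
  (R : realType) (d : measure_display) (Omega : measurableType d)
  (P : probability Omega R)
  (I K : finType) (J : {set (I * K)})
  (lam : I -> R) (mu : I * K -> R)
  (hlam : forall i, 0 < lam i) (hmu : forall j, j \in J -> 0 < mu j)
  (Ach : I -> R -> Omega -> nat) (Sch : I * K -> R -> Omega -> nat)
  (hA : forall i, renewal_process P (Ach i))
  (hS : forall j, j \in J -> renewal_process P (Sch j))
  (Y : completePseudoMetricType R) (hY : polish_space Y)
  (Ups : Omega -> Y)
  (hUps : forall B, borel_sets B -> measurable (Ups @^-1` B))
  (hindep : mutually_independent P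
     (fun x : option (I + (I * K)) =>
        match x with Some (inr j) => j \in J | _ => True end)
     (fun x => match x with
        | Some (inl i) => gen_sigma
            [set E | exists (t : R) (B : set nat), 0 <= t /\ E = Ach i t @^-1` B]
        | Some (inr j) => gen_sigma
            [set E | exists (t : R) (B : set nat), 0 <= t /\ E = Sch j t @^-1` B]
        | None => gen_sigma [set Ups @^-1` B | B in @borel_sets Y]
        end))
  (T : I * K -> R -> Omega -> R)
  (hT : admissible J lam mu Ach Sch T Ups (@borel_sets Y)) :
  forall t : R, 0 <= t ->
  forall (uI : I -> R) (uJ : I * K -> R), in_U J uI uJ ->
    G_n J lam mu Ach Sch Ups (@borel_sets Y) uI uJ (Tbar_le J T t uI uJ).
Proof.
move=> t ht0 uI uJ [huI huJ].
case: (boolp.EM (forall i, t <= uI i)) => htu; last first.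
  suff -> : Tbar_le J T t uI uJ = set0 by exact: SA0 (gen_SA _).
  by apply/seteqP; split=> w //= [h _]; exact: htu h.
have -> : Tbar_le J T t uI uJ = Hs R Omega I K J T uJ t.
  by apply/seteqP; split=> w /=; [case|split].
have [_ [hmono [hlip [hT0 [_ [_ hmeas]]]]]] := hT.
apply: H_meas => //.
- move=> j w x y jJ x0 xy; have [xi [_ _ _ _ hN]] := hS j jJ.
  rewrite /S_n; apply: (ren_mono hN); first by rewrite mulr_ge0 // ltW // hmu.
  by rewrite ler_pM2l // hmu.
- move=> j w x jJ x0; have [xi [_ _ _ _ hN]] := hS j jJ.
  have mu0 := hmu j jJ.
  have [e e0 he] := ren_rc hN w _ (mulr_ge0 (ltW mu0) x0).
  exists (e / mu j); first by rewrite divr_gt0.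
  move=> y xy ylt; rewrite /S_n; apply: he; first by rewrite ler_pM2l.
  move: ylt; rewrite -(ltr_pM2l mu0) mulrDr mulrCA mulfV ?mulr1 //.
  by apply/eqP => h; move: mu0; rewrite h ltxx.
- move=> j w s s' jJ s0 ss'.
  have := hlip j w s s' jJ s0 (le_trans s0 ss').
  rewrite (ger0_norm (_ : 0 <= s' - s)); last by rewrite subr_ge0.
  by rewrite ler_norml => /andP[_ h]; lra.
- move=> j s c jJ s0.
  have hB : measurable [set x : R | x <= c].
    have -> : [set x : R | x <= c] = [set` `]-oo, c]].
      by apply/seteqP; split=> x /=; rewrite in_itv /=.
    exact: measurable_itv.
  exact: hmeas j s [set x : R | x <= c] jJ s0 hB.
Qed.
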